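(* Let $\alpha>1$. The dynamic broadcast range-assignment problem in $\mathbb{R}^2$ with distance-power gradient $\alpha$ does not admit a stable approximation scheme (SAS).
   Context: A range assignment $\rho$ on a finite set $P\subset\mathbb{R}^2$ containing a source $s$ induces a directed graph with edge $(p,q)$ iff the Euclidean distance $|pq|\le\rho(p)$; it is feasible if the graph contains an arborescence rooted at $s$ spanning $P$; its cost is $\sum_p\rho(p)^\alpha$; $\mathrm{OPT}(P)$ is the minimum cost. In the dynamic version points other than $s$ are inserted and deleted; an update algorithm outputs a feasible assignment for the new set; a point not in the current set has range $0$. It is $k$-stable if each update modifies at most $k$ ranges. A SAS is an update algorithm that for every fixed $\varepsilon>0$ is $k(\varepsilon)$-stable and after every update has cost at most $(1+\varepsilon)\mathrm{OPT}$, with $k(\varepsilon)$ depending only on $\varepsilon$, not on $|P|$. *)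

(* Defs.v *)
From Stdlib Require Import Reals List.
Import ListNotations.
Open Scope R_scope.

Definition point : Type := (R * R)%type.

Definition dist (p q : point) : R :=
  sqrt ((fst p - fst q) ^ 2 + (snd p - snd q) ^ 2).

Definition point_eq_dec (p q : point) : {p = q} + {p <> q}.
Proof.
  destruct p as [a b], q as [c d].
  destruct (Req_EM_T a c) as [H1|H1]; destruct (Req_EM_T b d) as [H2|H2];
    subst; [left; reflexivity | right | right | right]; congruence.
Defined.

(* x ^ a for x >= 0 and real a > 0, with the convention 0 ^ a = 0. *)
Definition rpow (x a : R) : R := if Rle_dec x 0 then 0 else Rpower x a.

Definition range_assignment := point -> R.
Definition nonneg_ranges (rho : range_assignment) : Prop := forall p, 0 <= rho p.

(* Induced digraph on P: edge (p,q) iff p,q in P and |pq| <= rho p.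
   Feasible: the digraph contains an arborescence rooted at s spanning P,
   given by parent pointers [par]: every q in P other than s has its parent
   in P with an edge (par q, q), and following parents from any q in P
   reaches the root s (so the parent structure is acyclic, i.e. a tree). *)
Definition feasible (s : point) (P : list point) (rho : range_assignment) : Prop :=
  exists par : point -> point,
    (forall q, In q P -> q <> s -> In (par q) P /\ dist (par q) q <= rho (par q)) /\
    (forall q, In q P -> exists n : nat, Nat.iter n par q = s).

(* Cost sum_{p in P} rho(p)^alpha (P is duplicate-free by construction). *)
Definition cost (alpha : R) (P : list point) (rho : range_assignment) : R :=
  fold_right (fun p acc => rpow (rho p) alpha + acc) 0 P.

(* cost(rho) <= c * OPT(P), OPT(P) being the infimum of the costs of
   feasible range assignments for P. *)
Definition within_factor (alpha c : R) (s : point) (P : list point)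
  (rho : range_assignment) : Prop :=
  forall rho', nonneg_ranges rho' -> feasible s P rho' ->
    cost alpha P rho <= c * cost alpha P rho'.

Inductive update : Type :=
  | Ins : point -> update
  | Del : point -> update.

Definition apply_update (P : list point) (u : update) : list point :=
  match u with
  | Ins p => P ++ [p]
  | Del p => remove point_eq_dec p P
  end.

Definition applicable (s : point) (P : list point) (u : update) : Prop :=
  match u with
  | Ins p => p <> s /\ ~ In p P
  | Del p => p <> s /\ In p P
  end.

(* Histories are lists of updates, most recent first.
   The initial point set is {s}. *)
Fixpoint curset (s : point) (h : list update) : list point :=
  match h with
  | [] => [s]
  | u :: h' => apply_update (curset s h') u
  end.

Fixpoint valid_history (s : point) (h : list update) : Prop :=
  match h with
  | [] => True
  | u :: h' => valid_history s h' /\ applicable s (curset s h') u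
  end.

(* An (online, deterministic) update algorithm: given the source s and the
   history of updates so far, it outputs the current range assignment. *)
Definition algorithm := point -> list update -> range_assignment.

Definition correct_algorithm (A : algorithm) : Prop :=
  forall s h, valid_history s h ->
    nonneg_ranges (A s h) /\
    feasible s (curset s h) (A s h) /\
    (forall p, ~ In p (curset s h) -> A s h p = 0).

Definition k_stable (k : nat) (A : algorithm) : Prop :=
  forall s u h, valid_history s (u :: h) ->
    exists L : list point, (length L <= k)%nat /\
      forall p, A s (u :: h) p <> A s h p -> In p L.

Definition approx (alpha eps : R) (A : algorithm) : Prop :=
  forall s h, valid_history s h ->
    within_factor alpha (1 + eps) s (curset s h) (A s h).

Definition has_SAS (alpha : R) : Prop :=
  forall eps, 0 < eps ->
    exists (k : nat) (A : algorithm),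
      correct_algorithm A /\ k_stable k A /\ approx alpha eps A.

(* Main.v *)
Require Import Defs.
From Stdlib Require Import Reals Lra Lia List Permutation Classical Bool FinFun.
Import Defs.
Import ListNotations.
Open Scope R_scope.


Lemma Rpower_pos' x a : 0 < Rpower x a.
Proof. unfold Rpower. apply exp_pos. Qed.

Lemma rpow_nonneg x a : 0 <= rpow x a.
Proof. unfold rpow. destruct (Rle_dec x 0). lra. apply Rlt_le, Rpower_pos'. Qed.

Lemma rpow_pos_eq x a : 0 < x -> rpow x a = Rpower x a.
Proof. intros. unfold rpow. destruct (Rle_dec x 0); [lra|reflexivity]. Qed.

Lemma rpow_zero a : rpow 0 a = 0.
Proof. unfold rpow. destruct (Rle_dec 0 0); [reflexivity|lra]. Qed.

Lemma rpow_mono a x y : 0 <= a -> x <= y -> rpow x a <= rpow y a.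
Proof.
  intros Ha Hxy. unfold rpow. destruct (Rle_dec x 0).
  - destruct (Rle_dec y 0). lra. apply Rlt_le, Rpower_pos'.
  - destruct (Rle_dec y 0). lra. apply Rle_Rpower_l; lra.
Qed.

Lemma rpow_strict a x y : 0 < a -> x < y -> 0 < y -> rpow x a < rpow y a.
Proof.
  intros Ha Hxy Hy. unfold rpow. destruct (Rle_dec x 0).
  - destruct (Rle_dec y 0). lra. apply Rpower_pos'.
  - destruct (Rle_dec y 0). lra. apply Rlt_Rpower_l; lra.
Qed.

Lemma rpow_ge_self a x : 1 <= a -> 1 <= x -> x <= rpow x a.
Proof.
  intros Ha Hx. rewrite rpow_pos_eq by lra.
  rewrite <- (Rpower_1 x) at 1 by lra. apply Rle_Rpower; lra.
Qed.

Lemma Rpower_split x a : 0 < x -> Rpower x a = x * Rpower x (a - 1).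
Proof.
  intros Hx. replace a with (1 + (a - 1)) at 1 by ring.
  rewrite Rpower_plus, Rpower_1 by lra. reflexivity.
Qed.

Lemma Rpower_ge1 x a : 1 <= x -> 0 <= a -> 1 <= Rpower x a.
Proof.
  intros. rewrite <- (Rpower_O x) by lra. apply Rle_Rpower; lra.
Qed.

Lemma rpow_lin a e y : 1 <= a -> 1 <= e -> 0 <= y -> rpow e a + y <= rpow (e + y) a.
Proof.
  intros Ha He Hy. rewrite !rpow_pos_eq by lra.
  rewrite (Rpower_split e), (Rpower_split (e+y)) by lra.
  assert (H1 : Rpower e (a-1) <= Rpower (e+y) (a-1)) by (apply Rle_Rpower_l; lra).
  assert (H2 : 1 <= Rpower e (a-1)) by (apply Rpower_ge1; lra).
  nra.
Qed.

Lemma rpow_small a c sg : 1 <= a -> 0 < c -> c <= sg -> rpow c a <= c * Rpower sg (a - 1).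
Proof.
  intros Ha Hc Hs. rewrite rpow_pos_eq by lra. rewrite Rpower_split by lra.
  apply Rmult_le_compat_l. lra. apply Rle_Rpower_l; lra.
Qed.

Lemma dist_ge_x u v : Rabs (fst u - fst v) <= dist u v.
Proof.
  unfold dist. rewrite <- sqrt_Rsqr_abs. apply sqrt_le_1_alt.
  unfold Rsqr. simpl. pose proof (Rle_0_sqr (snd u - snd v)). unfold Rsqr in *. nra.
Qed.

Lemma dist_ge_y u v : Rabs (snd u - snd v) <= dist u v.
Proof.
  unfold dist. rewrite <- sqrt_Rsqr_abs. apply sqrt_le_1_alt.
  unfold Rsqr. simpl. pose proof (Rle_0_sqr (fst u - fst v)). unfold Rsqr in *. nra.
Qed.

Lemma dist_sym u v : dist u v = dist v u.
Proof. unfold dist. f_equal. ring. Qed.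

Lemma dist_nonneg u v : 0 <= dist u v.
Proof. unfold dist. apply sqrt_pos. Qed.

Lemma dist_hor x1 x2 y : dist (x1, y) (x2, y) = Rabs (x1 - x2).
Proof.
  unfold dist. simpl. rewrite <- sqrt_Rsqr_abs. f_equal. unfold Rsqr. ring.
Qed.

Lemma dist_ver x y1 y2 : dist (x, y1) (x, y2) = Rabs (y1 - y2).
Proof.
  unfold dist. simpl. rewrite <- sqrt_Rsqr_abs. f_equal. unfold Rsqr. ring.
Qed.

Lemma dist_ge_dx u v : fst v - fst u <= dist u v.
Proof. pose proof (dist_ge_x u v). pose proof (Rabs_minus_sym (fst u) (fst v)).
  pose proof (Rle_abs (fst v - fst u)). lra. Qed.
Lemma dist_ge_dx' u v : fst u - fst v <= dist u v.
Proof. pose proof (dist_ge_x u v). pose proof (Rle_abs (fst u - fst v)). lra. Qed.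
Lemma dist_ge_dy u v : snd v - snd u <= dist u v.
Proof. pose proof (dist_ge_y u v). pose proof (Rabs_minus_sym (snd u) (snd v)).
  pose proof (Rle_abs (snd v - snd u)). lra. Qed.
Lemma dist_ge_dy' u v : snd u - snd v <= dist u v.
Proof. pose proof (dist_ge_y u v). pose proof (Rle_abs (snd u - snd v)). lra. Qed.


Lemma cost_app a L1 L2 rho : cost a (L1 ++ L2) rho = cost a L1 rho + cost a L2 rho.
Proof. induction L1; simpl. ring. rewrite IHL1. ring. Qed.

Lemma cost_nonneg a L rho : 0 <= cost a L rho.
Proof. induction L; simpl. lra. pose proof (rpow_nonneg (rho a0) a). lra. Qed.

Lemma cost_ge_elem a L rho u : In u L -> rpow (rho u) a <= cost a L rho.
Proof.
  induction L; simpl; intros H. contradiction.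
  destruct H as [->|H].
  - pose proof (cost_nonneg a L rho). lra.
  - pose proof (IHL H). pose proof (rpow_nonneg (rho a0) a). lra.
Qed.

Lemma cost_ext a L r1 r2 : (forall u, In u L -> r1 u = r2 u) -> cost a L r1 = cost a L r2.
Proof.
  induction L; simpl; intros H. reflexivity.
  rewrite H by auto. rewrite IHL by auto. reflexivity.
Qed.

Lemma cost_perm a L1 L2 rho : Permutation L1 L2 -> cost a L1 rho = cost a L2 rho.
Proof.
  induction 1; simpl; try lra.
Qed.

Fixpoint cnt (f : nat -> bool) (m : nat) : nat :=
  match m with O => O | S m' => (cnt f m' + (if f m' then 1 else 0))%nat end.

Fixpoint csum (h : nat -> nat) (m : nat) : nat :=
  match m with O => O | S m' => (csum h m' + h m')%nat end.

Fixpoint lsum (L : list point) (g : point -> nat) : nat :=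
  match L with [] => O | x :: L' => (g x + lsum L' g)%nat end.

Definition lcount (L : list point) (f : point -> bool) : nat :=
  lsum L (fun u => if f u then 1%nat else 0%nat).

Lemma lsum_app L1 L2 g : lsum (L1 ++ L2) g = (lsum L1 g + lsum L2 g)%nat.
Proof. induction L1; simpl; lia. Qed.

Lemma exchange L (F : point -> nat -> bool) m :
  lsum L (fun u => cnt (F u) m) = csum (fun i => lcount L (fun u => F u i)) m.
Proof.
  induction m; simpl.
  - induction L; simpl; lia.
  - rewrite <- IHm. unfold lcount. clear IHm. induction L; simpl. lia. lia.
Qed.

Lemma csum_ge (h : nat -> nat) (f : nat -> bool) m :
  (forall i, (i < m)%nat -> f i = true -> (1 <= h i)%nat) -> (cnt f m <= csum h m)%nat.
Proof.
  induction m; simpl; intros H. lia.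
  assert (IH := IHm (fun i Hi => H i ltac:(lia))).
  destruct (f m) eqn:E. specialize (H m ltac:(lia) E). lia. lia.
Qed.

Lemma cnt_true m : cnt (fun _ => true) m = m.
Proof. induction m; simpl; lia. Qed.

Lemma lcount_ge1 L f u : In u L -> f u = true -> (1 <= lcount L f)%nat.
Proof.
  unfold lcount. induction L; simpl; intros H Hf. contradiction.
  destruct H as [->|H]. rewrite Hf. lia. specialize (IHL H Hf). lia.
Qed.

Lemma cnt_ext f g m : (forall i, (i < m)%nat -> f i = g i) -> cnt f m = cnt g m.
Proof.
  induction m; simpl; intros H. reflexivity.
  rewrite IHm by (intros; apply H; lia). rewrite H by lia. reflexivity.
Qed.

Lemma cnt_zero f m : (forall i, (i < m)%nat -> f i = false) -> cnt f m = O.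
Proof.
  induction m; simpl; intros H. reflexivity.
  rewrite IHm by (intros; apply H; lia). rewrite H by lia. reflexivity.
Qed.

Lemma cnt_compl f m : (cnt f m + cnt (fun i => negb (f i)) m)%nat = m.
Proof. induction m; simpl. reflexivity. destruct (f m); simpl; lia. Qed.

Lemma cnt_or f g m : (cnt (fun i => orb (f i) (g i)) m <= cnt f m + cnt g m)%nat.
Proof. induction m; simpl. lia. destruct (f m), (g m); simpl; lia. Qed.

Lemma cnt_mono f g m : (forall i, (i < m)%nat -> f i = true -> g i = true) -> (cnt f m <= cnt g m)%nat.
Proof.
  induction m; simpl; intros H. lia.
  assert (IH := IHm (fun i Hi => H i ltac:(lia))).
  destruct (f m) eqn:E. rewrite (H m ltac:(lia) E). lia. destruct (g m); lia.
Qed.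

Lemma cnt_filter f m : cnt f m = length (filter f (seq 0 m)).
Proof.
  induction m. reflexivity.
  rewrite seq_S, filter_app, length_app, <- IHm. simpl. destruct (f m); simpl; lia.
Qed.

Lemma cnt_inj_incl (f : nat -> bool) (g : nat -> point) (L : list point) m :
  (forall i, (i < m)%nat -> f i = true -> In (g i) L) ->
  (forall i j, (i < m)%nat -> (j < m)%nat -> g i = g j -> i = j) ->
  (cnt f m <= length L)%nat.
Proof.
  intros Hin Hinj. rewrite cnt_filter.
  rewrite <- (length_map g).
  apply NoDup_incl_length.
  - apply NoDup_map_inv with (f := fun x => x). rewrite map_id.
    assert (Hnd : NoDup (filter f (seq 0 m))) by (apply NoDup_filter, seq_NoDup).
    assert (Hsub : forall i, In i (filter f (seq 0 m)) -> (i < m)%nat).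
    { intros i Hi. apply filter_In in Hi. destruct Hi as [Hi _]. apply in_seq in Hi. lia. }
    revert Hnd Hsub. generalize (filter f (seq 0 m)). intros l Hnd Hsub.
    induction l as [|x l IH]; simpl. constructor.
    inversion Hnd; subst. constructor.
    + intros Hx. apply in_map_iff in Hx. destruct Hx as [y [Hy Hyl]].
      assert (y = x) by (apply Hinj; auto; apply Hsub; simpl; auto).
      subst. contradiction.
    + apply IH; auto. intros; apply Hsub; simpl; auto.
  - intros y Hy. apply in_map_iff in Hy. destruct Hy as [i [<- Hi]].
    apply filter_In in Hi. destruct Hi as [Hi Hf]. apply in_seq in Hi.
    apply Hin; auto. lia.
Qed.

Lemma cost_lb_cnt a L rho (g1 g2 : point -> nat) (c : R) :
  (forall u, In u L -> INR (g1 u) + c * INR (g2 u) <= rpow (rho u) a) ->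
  INR (lsum L g1) + c * INR (lsum L g2) <= cost a L rho.
Proof.
  induction L; simpl; intros H. lra.
  rewrite !plus_INR. specialize (IHL (fun u Hu => H u (or_intror Hu))).
  specialize (H a0 (or_introl eq_refl)). lra.
Qed.

Lemma cut_lemma s P rho (Sx : point -> Prop) q0 :
  feasible s P rho -> In q0 P -> Sx q0 -> ~ Sx s ->
  exists q u, In q P /\ Sx q /\ In u P /\ ~ Sx u /\ dist u q <= rho u.
Proof.
  intros [par [H1 H2]] Hq0 HS Hs.
  destruct (H2 q0 Hq0) as [n Hn].
  revert q0 Hq0 HS Hn. induction n; intros q0 Hq0 HS Hn.
  - simpl in Hn. rewrite Hn in HS. contradiction.
  - rewrite Nat.iter_succ_r in Hn.
    assert (Hne : q0 <> s) by (intro E; rewrite E in HS; contradiction).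
    destruct (H1 q0 Hq0 Hne) as [Hp Hd].
    destruct (classic (Sx (par q0))) as [HSp|HSp].
    + exact (IHn (par q0) Hp HSp Hn).
    + exists q0, (par q0). auto.
Qed.

Fixpoint next_in (L : list point) (u : point) : point :=
  match L with
  | [] => u
  | x :: L' => if point_eq_dec x u then (match L' with [] => u | y :: _ => y end)
               else next_in L' u
  end.

Fixpoint prev_in (L : list point) (q : point) : point :=
  match L with
  | [] => q
  | x :: L' => match L' with
               | [] => q
               | y :: _ => if point_eq_dec y q then x else prev_in L' q
               end
  end.

Definition rhoL (L : list point) (u : point) : R := dist u (next_in L u).

Fixpoint pathcost (a : R) (L : list point) : R :=
  match L with
  | x :: ((y :: _) as L') => rpow (dist x y) a + pathcost a L'
  | _ => 0
  end.

Lemma dist_self u : dist u u = 0.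
Proof. unfold dist. replace ((fst u - fst u) ^ 2 + (snd u - snd u) ^ 2) with 0 by ring.
  apply sqrt_0. Qed.

Lemma prev_nth L j d : NoDup L -> (S j < length L)%nat ->
  prev_in L (nth (S j) L d) = nth j L d.
Proof.
  revert j. induction L as [|x L IH]; intros j Hnd Hj; simpl in *. lia.
  destruct L as [|y L']. simpl in Hj. lia.
  inversion Hnd as [|? ? Hx Hnd']; subst.
  destruct j as [|j'].
  - simpl. destruct (point_eq_dec y y); congruence.
  - simpl nth at 1.
    assert (Hne : y <> nth (S j') (y :: L') d).
    { inversion Hnd'; subst. intro E. simpl in E. apply H1. rewrite E.
      apply nth_In. simpl in Hj. lia. }
    simpl. destruct (point_eq_dec y (nth j' L' d)) as [E|E].
    + exfalso. apply Hne. simpl. exact E.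
    + specialize (IH j' Hnd' ltac:(simpl in *; lia)). simpl in IH.
      rewrite IH. reflexivity.
Qed.

Lemma next_nth L j d : NoDup L -> (S j < length L)%nat ->
  next_in L (nth j L d) = nth (S j) L d.
Proof.
  revert j. induction L as [|x L IH]; intros j Hnd Hj; simpl in *. lia.
  inversion Hnd as [|? ? Hx Hnd']; subst.
  destruct j as [|j'].
  - simpl. destruct (point_eq_dec x x); [|congruence]. destruct L. simpl in Hj; lia. reflexivity.
  - assert (Hne : x <> nth j' L d).
    { intro E. apply Hx. rewrite E. apply nth_In. lia. }
    destruct (point_eq_dec x (nth j' L d)); [contradiction|].
    apply IH; auto. lia.
Qed.

Lemma feasible_path s vs : NoDup (s :: vs) -> feasible s (s :: vs) (rhoL (s :: vs)).
Proof.
  intros Hnd. set (L := s :: vs) in *.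
  exists (prev_in L). split.
  - intros q Hq Hne. destruct (In_nth L q s Hq) as [j [Hj Hjq]].
    destruct j as [|j']. { simpl in Hjq. congruence. }
    subst q. rewrite prev_nth by auto. split.
    + apply nth_In. lia.
    + unfold rhoL. rewrite next_nth by auto. lra.
  - intros q Hq. destruct (In_nth L q s Hq) as [j [Hj Hjq]]. exists j. subst q. clear Hq.
    induction j. reflexivity.
    rewrite Nat.iter_succ_r. rewrite prev_nth by auto. apply IHj. lia.
Qed.

Lemma feasible_equiv s L P rho : (forall q, In q P <-> In q L) -> feasible s L rho -> feasible s P rho.
Proof.
  intros Heq [par [H1 H2]]. exists par. split.
  - intros q Hq Hne. destruct (H1 q (proj1 (Heq q) Hq) Hne). split; auto. apply Heq; auto.
  - intros q Hq. apply H2. apply Heq; auto.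
Qed.

Lemma cost_path a L : NoDup L -> cost a L (rhoL L) = pathcost a L.
Proof.
  induction L as [|x L IH]; intros Hnd. reflexivity.
  inversion Hnd as [|? ? Hx Hnd']; subst.
  destruct L as [|y L'].
  - simpl. unfold rhoL. simpl. destruct (point_eq_dec x x); [|congruence].
    rewrite dist_self, rpow_zero. ring.
  - change (cost a (x :: y :: L') (rhoL (x :: y :: L'))) with
      (rpow (rhoL (x :: y :: L') x) a + cost a (y :: L') (rhoL (x :: y :: L'))).
    rewrite (cost_ext a (y :: L') (rhoL (x :: y :: L')) (rhoL (y :: L'))).
    + rewrite IH by auto.
      simpl pathcost. unfold rhoL at 1. simpl. destruct (point_eq_dec x x); [|congruence].
      reflexivity.
    + intros u Hu. unfold rhoL. simpl next_in at 1.
      destruct (point_eq_dec x u). { subst. contradiction. } reflexivity.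
Qed.

Lemma rhoL_nonneg L : nonneg_ranges (rhoL L).
Proof. intros u. apply dist_nonneg. Qed.


Lemma pc_snoc a L x y : pathcost a (L ++ [x; y]) = pathcost a (L ++ [x]) + rpow (dist x y) a.
Proof.
  induction L as [|z L IH]. simpl. ring.
  destruct L as [|w L'].
  - simpl. ring.
  - change ((z :: w :: L') ++ [x; y]) with (z :: (w :: L') ++ [x; y]).
    change ((z :: w :: L') ++ [x]) with (z :: (w :: L') ++ [x]).
    simpl pathcost at 1 2. simpl in IH. rewrite IH. ring.
Qed.

Lemma pathcost_rev a L : pathcost a (rev L) = pathcost a L.
Proof.
  induction L as [|x L IH]. reflexivity.
  destruct L as [|y L']. reflexivity.
  change (rev (x :: y :: L')) with ((rev L' ++ [y]) ++ [x]).
  rewrite <- app_assoc. simpl app at 2.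
  rewrite pc_snoc. change (rev L' ++ [y]) with (rev (y :: L')). rewrite IH.
  simpl. rewrite dist_sym. ring.
Qed.

Lemma last_indep (l : list point) z d1 d2 : last (z :: l) d1 = last (z :: l) d2.
Proof. revert z. induction l; intros z; simpl. reflexivity. apply IHl. Qed.

Lemma pathcost_app a x L1 y L2 :
  pathcost a (x :: L1 ++ y :: L2) = pathcost a (x :: L1) + rpow (dist (last (x :: L1) x) y) a + pathcost a (y :: L2).
Proof.
  revert x. induction L1 as [|z L1 IH]; intros x.
  - simpl. ring.
  - change (x :: (z :: L1) ++ y :: L2) with (x :: z :: (L1 ++ y :: L2)).
    change (pathcost a (x :: z :: L1 ++ y :: L2)) with
      (rpow (dist x z) a + pathcost a (z :: L1 ++ y :: L2)).
    rewrite IH.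
    change (pathcost a (x :: z :: L1)) with (rpow (dist x z) a + pathcost a (z :: L1)).
    replace (last (x :: z :: L1) x) with (last (z :: L1) z).
    ring. simpl. destruct L1. reflexivity. apply last_indep.
Qed.

Lemma curset_ins s xs : curset s (map Ins (rev xs)) = s :: xs.
Proof.
  induction xs as [|x xs IH] using rev_ind. reflexivity.
  rewrite rev_app_distr. simpl. rewrite IH. reflexivity.
Qed.

Lemma valid_ins s xs : NoDup (s :: xs) -> valid_history s (map Ins (rev xs)).
Proof.
  induction xs as [|x xs IH] using rev_ind; intros Hnd. simpl. exact I.
  rewrite rev_app_distr. simpl. split.
  - apply IH. change (s :: xs ++ [x]) with ((s :: xs) ++ [x]) in Hnd.
    apply NoDup_app_remove_r in Hnd. exact Hnd.
  - rewrite curset_ins.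
    change (s :: xs ++ [x]) with ((s :: xs) ++ [x]) in Hnd.
    apply NoDup_remove_2 in Hnd. rewrite app_nil_r in Hnd.
    split. intro E. apply Hnd. subst. simpl. auto. exact Hnd.
Qed.


Definition Rleb (x y : R) : bool := if Rle_dec x y then true else false.
Definition Reqb (x y : R) : bool := if Req_EM_T x y then true else false.

Lemma Rleb_iff x y : Rleb x y = true <-> x <= y.
Proof. unfold Rleb. destruct (Rle_dec x y); split; intros; auto; try discriminate; lra. Qed.
Lemma Rleb_false x y : Rleb x y = false <-> y < x.
Proof. unfold Rleb. destruct (Rle_dec x y); split; intros; auto; try discriminate; lra. Qed.
Lemma Reqb_iff x y : Reqb x y = true <-> x = y.
Proof. unfold Reqb. destruct (Req_EM_T x y); split; intros; auto; try discriminate; lra. Qed.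
Lemma Reqb_false x y : Reqb x y = false <-> x <> y.
Proof. unfold Reqb. destruct (Req_EM_T x y); split; intros; auto; try discriminate; lra. Qed.

Definition lk (L0 a : R) (i : nat) : R := L0 + INR i * (1 + a).
Definition rk (L0 a : R) (i : nat) : R := lk L0 a i + 1.

Lemma lk_S L0 a i : lk L0 a (S i) = lk L0 a i + 1 + a.
Proof. unfold lk. rewrite S_INR. ring. Qed.

Definition Ff L0 a x R i := Rleb x (lk L0 a i) && Rleb (rk L0 a i) (x + R).
Definition Ffno L0 a x R i := Ff L0 a x R i && negb (Reqb x (lk L0 a i)).

Lemma LLf m L0 a x R : 0 < a -> 0 <= R ->
  (forall i, (i < m)%nat -> x <= lk L0 a i -> x = lk L0 a i \/ x + a <= lk L0 a i) ->
  INR (cnt (Ff L0 a x R) m) + a * INR (cnt (Ffno L0 a x R) m) <= R.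
Proof.
  intros Ha HR H.
  assert (Inv : forall m', (m' <= m)%nat ->
    INR (cnt (Ff L0 a x R) m') + a * INR (cnt (Ffno L0 a x R) m')
      <= Rmax 0 (Rmin (x + R) (lk L0 a m' - a) - x)).
  { induction m' as [|m' IH]; intros Hm'.
    - simpl. unfold Rmax. destruct Rle_dec; lra.
    - specialize (IH ltac:(lia)). simpl cnt. rewrite !plus_INR.
      rewrite lk_S. unfold Ffno, Ff in *.
      destruct (Rleb x (lk L0 a m')) eqn:E1; destruct (Rleb (rk L0 a m') (x + R)) eqn:E2; simpl;
        try (rewrite Rplus_0_r, Rplus_0_r; revert IH; unfold Rmax, Rmin; repeat destruct Rle_dec; simpl; lra).
      apply Rleb_iff in E1. apply Rleb_iff in E2. unfold rk in E2.
      destruct (H m' ltac:(lia) E1) as [Eq|Lt].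
      + assert (Reqb x (lk L0 a m') = true) as -> by (apply Reqb_iff; auto). simpl.
        revert IH. unfold Rmax, Rmin; repeat destruct Rle_dec; simpl; lra.
      + assert (Reqb x (lk L0 a m') = false) as -> by (apply Reqb_false; lra). simpl.
        revert IH. unfold Rmax, Rmin; repeat destruct Rle_dec; simpl; lra. }
  specialize (Inv m (le_n m)). revert Inv. unfold Rmax, Rmin; repeat destruct Rle_dec; lra.
Qed.

Definition Fb L0 a x R i := Rleb (rk L0 a i) x && Rleb (x - R) (lk L0 a i).
Definition Fbno L0 a x R i := Fb L0 a x R i && negb (Reqb x (rk L0 a i)).

Lemma LLb m L0 a x R : 0 < a -> 0 <= R ->
  (forall i, (i < m)%nat -> rk L0 a i <= x -> x = rk L0 a i \/ rk L0 a i + a <= x) ->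
  INR (cnt (Fb L0 a x R) m) + a * INR (cnt (Fbno L0 a x R) m) <= R.
Proof.
  intros Ha HR H.
  assert (Inv : forall m', (m' <= m)%nat ->
    INR (cnt (Fb L0 a x R) m') + a * INR (cnt (Fbno L0 a x R) m')
      <= Rmax 0 (Rmin x (lk L0 a m') - (x - R))).
  { induction m' as [|m' IH]; intros Hm'.
    - simpl. unfold Rmax. destruct Rle_dec; lra.
    - specialize (IH ltac:(lia)). simpl cnt. rewrite !plus_INR.
      rewrite lk_S. unfold Fbno, Fb in *.
      destruct (Rleb (rk L0 a m') x) eqn:E1; destruct (Rleb (x - R) (lk L0 a m')) eqn:E2; simpl;
        try (rewrite Rplus_0_r, Rplus_0_r; revert IH; unfold Rmax, Rmin; repeat destruct Rle_dec; simpl; lra).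
      apply Rleb_iff in E1. apply Rleb_iff in E2. 
      destruct (H m' ltac:(lia) E1) as [Eq|Lt]; unfold rk in *.
      + assert (Reqb x (lk L0 a m' + 1) = true) as -> by (apply Reqb_iff; auto). simpl.
        revert IH. unfold Rmax, Rmin; repeat destruct Rle_dec; simpl; lra.
      + assert (Reqb x (lk L0 a m' + 1) = false) as -> by (apply Reqb_false; lra). simpl.
        revert IH. unfold Rmax, Rmin; repeat destruct Rle_dec; simpl; lra. }
  specialize (Inv m (le_n m)). revert Inv. unfold Rmax, Rmin; repeat destruct Rle_dec; lra.
Qed.


Section Geo.
Variables (al a e1 d : R) (m N1 n2 n3 : nat).
Hypothesis Hal : 1 < al.
Hypothesis Ha0 : 0 < a.
Hypothesis Ha1 : a < 1.
Hypothesis Hd1 : 1 <= d.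
Hypothesis He1 : d <= e1.
Hypothesis He2 : e1 < 2 * d.
Hypothesis HN1 : (1 <= N1)%nat.

Definition s0 : point := (0, 0).
Definition pp : point := (- d, 0).
Definition ev (i : nat) : point := (e1 + INR i * (1 + a), 0).
Definition od (i : nat) : point := (e1 + INR i * (1 + a) + a, 0).
Definition L0 := e1 + a.
Definition XR := e1 + INR m * (1 + a) + a.
Definition Yt := 2 * d.
Definition Rp (j : nat) : point := (XR, Yt * INR j / INR N1).
Definition Tp (j : nat) : point := (XR - (XR + 2 * d) * INR j / INR (S n2), Yt).
Definition Lp (j : nat) : point := (- (2 * d), Yt - Yt * INR j / INR (S n3)).

Fixpoint cl (k : nat) : list point :=
  match k with O => [ev 0] | S k' => cl k' ++ [od k'; ev (S k')] end.

Definition rest : list point :=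
  map Rp (seq 0 (S N1)) ++ map Tp (seq 1 (S n2)) ++ map Lp (seq 1 (S n3)).
Definition CR := cl m ++ rest.
Definition P1 := s0 :: pp :: CR.
Definition P2 := s0 :: CR.

Lemma INR_N1 : 1 <= INR N1.
Proof. apply (le_INR 1). lia. Qed.

Lemma nat_split (i j : nat) : (INR j <= INR i) \/ (INR i + 1 <= INR j).
Proof.
  destruct (Compare_dec.le_lt_dec j i) as [H|H].
  - left. apply le_INR. exact H.
  - right. rewrite <- S_INR. apply le_INR. lia.
Qed.

Lemma in_cl k q : In q (cl k) -> (exists j, (j <= k)%nat /\ q = ev j) \/ (exists j, (j < k)%nat /\ q = od j).
Proof.
  induction k; simpl; intros H.
  - destruct H as [H|[]]. left. exists O. split. lia. auto.
  - apply in_app_or in H. destruct H as [H|H].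
    + destruct (IHk H) as [[j [Hj ->]]|[j [Hj ->]]].
      left; exists j; split; [lia|auto]. right; exists j; split; [lia|auto].
    + simpl in H. destruct H as [<-|[<-|[]]].
      right; exists k; split; [lia|auto]. left; exists (S k); split; [lia|auto].
Qed.

Lemma ev_in_cl k j : (j <= k)%nat -> In (ev j) (cl k).
Proof.
  induction k; intros H; simpl.
  - left. f_equal. lia.
  - apply in_or_app. destruct (Nat.eq_dec j (S k)) as [->|Hne].
    + right. simpl. auto.
    + left. apply IHk. lia.
Qed.

Lemma od_in_cl k j : (j < k)%nat -> In (od j) (cl k).
Proof.
  induction k; intros H; simpl. lia.
  apply in_or_app. destruct (Nat.eq_dec j k) as [->|Hne].
  + right. simpl. auto.
  + left. apply IHk. lia.
Qed.

Lemma INR_m_le (i : nat) : (i <= m)%nat -> INR i <= INR m.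
Proof. apply le_INR. Qed.

Lemma reg_cl q : In q (cl m) -> snd q = 0 /\ e1 <= fst q /\ fst q <= XR - a.
Proof.
  intros H. destruct (in_cl m q H) as [[j [Hj ->]]|[j [Hj ->]]]; simpl; unfold XR;
  pose proof (pos_INR j); pose proof (le_INR _ _ Hj) as Hj'.
  - repeat split; nra.
  - assert (INR j + 1 <= INR m) by (rewrite <- S_INR; apply le_INR; lia). repeat split; nra.
Qed.

Lemma reg_R q : In q (map Rp (seq 0 (S N1))) -> fst q = XR /\ 0 <= snd q <= Yt.
Proof.
  intros H. apply in_map_iff in H. destruct H as [j [<- Hj]]. apply in_seq in Hj.
  unfold Rp, Tp, Lp; cbn [fst snd]. pose proof INR_N1. assert (INR j <= INR N1) by (apply le_INR; lia).
  pose proof (pos_INR j). unfold Yt. split. reflexivity. split.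
  - apply Rmult_le_pos. nra. apply Rlt_le, Rinv_0_lt_compat. lra.
  - unfold Rdiv. rewrite Rmult_assoc. assert (INR j * / INR N1 <= 1).
    { apply (Rmult_le_reg_r (INR N1)). lra. rewrite Rmult_assoc, Rinv_l by lra. lra. }
    assert (0 <= INR j * / INR N1) by (apply Rmult_le_pos; [lra|apply Rlt_le, Rinv_0_lt_compat; lra]).
    nra.
Qed.

Lemma XR_ge : e1 + a <= XR.
Proof. unfold XR. pose proof (pos_INR m). nra. Qed.

Lemma reg_T q : In q (map Tp (seq 1 (S n2))) -> snd q = Yt /\ - (2 * d) <= fst q < XR.
Proof.
  intros H. apply in_map_iff in H. destruct H as [j [<- Hj]]. apply in_seq in Hj.
  unfold Rp, Tp, Lp; cbn [fst snd]. split. reflexivity.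
  assert (Hn : 0 < INR (S n2)) by apply lt_0_INR, Nat.lt_0_succ.
  assert (1 <= INR j) by (apply (le_INR 1); lia).
  assert (INR j <= INR (S n2)) by (apply le_INR; lia).
  pose proof XR_ge.
  set (t := INR j / INR (S n2)).
  assert (Ht1 : t <= 1). { unfold t. apply (Rmult_le_reg_r (INR (S n2))). lra. unfold Rdiv.
    rewrite Rmult_assoc, Rinv_l by lra. lra. }
  assert (Ht0 : 0 < t). { unfold t. apply Rdiv_lt_0_compat; lra. }
  replace ((XR + 2 * d) * INR j / INR (S n2)) with ((XR + 2 * d) * t) by (unfold t, Rdiv; ring).
  assert (Hp : 0 < XR + 2 * d) by lra.
  pose proof (Rmult_le_pos (XR + 2 * d) (1 - t) ltac:(lra) ltac:(lra)).
  pose proof (Rmult_lt_0_compat (XR + 2 * d) t Hp Ht0).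
  split; lra.
Qed.

Lemma reg_L q : In q (map Lp (seq 1 (S n3))) -> fst q = - (2 * d) /\ 0 <= snd q < Yt.
Proof.
  intros H. apply in_map_iff in H. destruct H as [j [<- Hj]]. apply in_seq in Hj.
  unfold Rp, Tp, Lp; cbn [fst snd]. split. reflexivity.
  assert (Hn : 0 < INR (S n3)) by apply lt_0_INR, Nat.lt_0_succ.
  assert (1 <= INR j) by (apply (le_INR 1); lia).
  assert (INR j <= INR (S n3)) by (apply le_INR; lia).
  set (t := INR j / INR (S n3)).
  assert (Ht1 : t <= 1). { unfold t. apply (Rmult_le_reg_r (INR (S n3))). lra. unfold Rdiv.
    rewrite Rmult_assoc, Rinv_l by lra. lra. }
  assert (Ht0 : 0 < t). { unfold t. apply Rdiv_lt_0_compat; lra. }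
  replace (Yt * INR j / INR (S n3)) with (Yt * t) by (unfold t, Rdiv; ring).
  unfold Yt. assert (0 < 2 * d) by lra.
  pose proof (Rmult_le_pos (2 * d) (1 - t) ltac:(lra) ltac:(lra)).
  pose proof (Rmult_lt_0_compat (2 * d) t ltac:(lra) Ht0).
  split; lra.
Qed.

Lemma in_rest q : In q rest ->
  (fst q = XR /\ 0 <= snd q <= Yt) \/ (snd q = Yt /\ - (2 * d) <= fst q < XR) \/
  (fst q = - (2 * d) /\ 0 <= snd q < Yt).
Proof.
  unfold rest. intros H. apply in_app_or in H. destruct H as [H|H].
  left. apply reg_R; auto.
  apply in_app_or in H. destruct H as [H|H]. right; left. apply reg_T; auto.
  right; right. apply reg_L; auto.
Qed.

Lemma in_CR q : In q CR -> (In q (cl m)) \/ In q rest.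
Proof. unfold CR. apply in_app_or. Qed.

Lemma in_P2 q : In q P2 -> q = s0 \/ In q CR.
Proof. unfold P2. simpl. intros [H|H]; [left; auto|right; auto]. Qed.

Lemma in_P1 q : In q P1 -> q = s0 \/ q = pp \/ In q CR.
Proof. unfold P1. simpl. intros [H|[H|H]]; [left; auto|right; left; auto|right; right; auto]. Qed.

Definition lkk (i : nat) := lk L0 a i.
Definition rkk (i : nat) := rk L0 a i.

Lemma fst_od i : fst (od i) = lkk i.
Proof. unfold od, lkk, lk, L0. simpl. ring. Qed.
Lemma fst_ev_S i : fst (ev (S i)) = rkk i.
Proof. unfold ev, rkk, rk, lk, L0. cbn [fst]. rewrite S_INR. ring. Qed.

Ltac cl_cases q H :=
  let j := fresh "j" in let Hj := fresh "Hj" in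
  destruct (in_cl _ q H) as [[j [Hj ->]]|[j [Hj ->]]]; unfold ev, od, lkk, rkk, rk, lk, L0; cbn [fst snd].

Lemma K1 k q i : In q (cl k) -> lkk i < fst q -> rkk i <= fst q.
Proof.
  intros H. cl_cases q H; intros Hlt; destruct (nat_split i j); nra.
Qed.

Lemma K2 k q i : In q (cl k) -> fst q <= lkk i -> fst q = lkk i \/ fst q + a <= lkk i.
Proof.
  intros H. cl_cases q H; intros Hle.
  - right. destruct (nat_split i j); nra.
  - destruct (Nat.eq_dec i j) as [->|Hne]. left; ring.
    right. destruct (nat_split i j) as [Hc|Hc].
    + assert (INR j <> INR i) by (intro E; apply INR_eq in E; lia).
      assert (INR j < INR i \/ INR j = INR i) as [Hc'|Hc'] by lra. 
      * assert (INR j + 1 <= INR i). { rewrite <- S_INR. apply le_INR. apply INR_lt in Hc'. lia. } nra.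
      * contradiction.
    + nra.
Qed.

Lemma K3 k q i : In q (cl k) -> rkk i <= fst q -> fst q = rkk i \/ rkk i + a <= fst q.
Proof.
  intros H. cl_cases q H; intros Hle.
  - destruct (Nat.eq_dec j (S i)) as [->|Hne]. left; rewrite S_INR; ring.
    right. destruct (nat_split (S i) j) as [Hc|Hc]; rewrite S_INR in Hc.
    + assert (INR j <> INR i + 1) by (rewrite <- S_INR; intro E; apply INR_eq in E; lia).
      nra.
    + nra.
  - right. destruct (nat_split i j); nra.
Qed.

Lemma K3' k q i : In q (cl k) -> rkk i <= fst q -> fst q = rkk i \/ rkk i + a <= fst q.
Proof. apply K3. Qed.

Lemma K5 i j : fst (od j) <> rkk i.
Proof.
  rewrite fst_od. unfold lkk, rkk, rk, lk, L0. intro E.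
  destruct (nat_split i j); nra.
Qed.

Lemma cl_bound k q : In q (cl k) -> fst q <= e1 + INR k * (1 + a).
Proof.
  intros H. cl_cases q H.
  - assert (INR j <= INR k) by (apply le_INR; lia). nra.
  - assert (INR j + 1 <= INR k) by (rewrite <- S_INR; apply le_INR; lia). nra.
Qed.

Lemma NoDup_cl k : NoDup (cl k).
Proof.
  induction k. simpl. constructor. intros []. constructor.
  simpl. apply NoDup_app. exact IHk.
  - constructor. simpl. intros [E|[]]. apply (f_equal fst) in E. unfold od, ev in E. cbn [fst] in E.
    rewrite S_INR in E. nra. constructor. intros []. constructor.
  - intros q Hq Hq2. pose proof (cl_bound k q Hq). simpl in Hq2.
    pose proof (pos_INR k).
    destruct Hq2 as [<-|[<-|[]]]; unfold od, ev in *; cbn [fst] in *; try rewrite S_INR in *; nra.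
Qed.

Lemma Yt_pos : 0 < Yt.
Proof. unfold Yt. lra. Qed.

Lemma NoDup_rest : NoDup rest.
Proof.
  pose proof Yt_pos as HY. pose proof INR_N1.
  unfold rest. apply NoDup_app; [|apply NoDup_app|].
  - apply Injective_map_NoDup; [|apply seq_NoDup].
    intros i j E. apply (f_equal snd) in E. unfold Rp in E. cbn [snd] in E.
    apply INR_eq. apply (Rmult_eq_reg_l (Yt / INR N1)).
    replace (Yt / INR N1 * INR i) with (Yt * INR i / INR N1) by (field; lra).
    replace (Yt / INR N1 * INR j) with (Yt * INR j / INR N1) by (field; lra). exact E.
    apply Rgt_not_eq, Rdiv_lt_0_compat; lra.
  - apply Injective_map_NoDup; [|apply seq_NoDup].
    assert (Hn : 0 < INR (S n2)) by apply lt_0_INR, Nat.lt_0_succ.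
    pose proof XR_ge.
    intros i j E. apply (f_equal fst) in E. unfold Tp in E. cbn [fst] in E.
    apply INR_eq. apply (Rmult_eq_reg_l ((XR + 2 * d) / INR (S n2))).
    replace ((XR + 2 * d) / INR (S n2) * INR i) with ((XR + 2 * d) * INR i / INR (S n2)) by (field; lra).
    replace ((XR + 2 * d) / INR (S n2) * INR j) with ((XR + 2 * d) * INR j / INR (S n2)) by (field; lra). lra.
    apply Rgt_not_eq, Rdiv_lt_0_compat; lra.
  - apply Injective_map_NoDup; [|apply seq_NoDup].
    assert (Hn : 0 < INR (S n3)) by apply lt_0_INR, Nat.lt_0_succ.
    intros i j E. apply (f_equal snd) in E. unfold Lp in E. cbn [snd] in E.
    apply INR_eq. apply (Rmult_eq_reg_l (Yt / INR (S n3))).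
    replace (Yt / INR (S n3) * INR i) with (Yt * INR i / INR (S n3)) by (field; lra).
    replace (Yt / INR (S n3) * INR j) with (Yt * INR j / INR (S n3)) by (field; lra). lra.
    apply Rgt_not_eq, Rdiv_lt_0_compat; lra.
  - intros q H1 H2. apply reg_T in H1. apply reg_L in H2. lra.
  - intros q H1 H2. apply reg_R in H1. apply in_app_or in H2. destruct H2 as [H2|H2].
    apply reg_T in H2. lra. apply reg_L in H2. pose proof XR_ge. lra.
Qed.

Lemma NoDup_CR : NoDup CR.
Proof.
  unfold CR. apply NoDup_app. apply NoDup_cl. apply NoDup_rest.
  intros q H1 H2. apply reg_cl in H1. apply in_rest in H2. unfold Yt in H2. lra.
Qed.

Lemma s0_notin_CR : ~ In s0 CR.
Proof.
  intros H. apply in_CR in H. destruct H as [H|H].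
  apply reg_cl in H. unfold s0 in H. simpl in H. lra.
  apply in_rest in H. unfold s0 in H. simpl in H. pose proof XR_ge. unfold Yt in H. lra.
Qed.

Lemma pp_notin_CR : ~ In pp CR.
Proof.
  intros H. apply in_CR in H. destruct H as [H|H].
  apply reg_cl in H. unfold pp in H. simpl in H. lra.
  apply in_rest in H. unfold pp in H. simpl in H. pose proof XR_ge. unfold Yt in H. lra.
Qed.

Lemma NoDup_P1 : NoDup P1.
Proof.
  unfold P1. constructor.
  - simpl. intros [E|E]. unfold s0, pp in E. injection E. lra. apply s0_notin_CR; auto.
  - constructor. apply pp_notin_CR. apply NoDup_CR.
Qed.

Lemma NoDup_P2 : NoDup P2.
Proof. unfold P2. constructor. apply s0_notin_CR. apply NoDup_CR. Qed.


Lemma rpow_one : rpow 1 al = 1.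
Proof. rewrite rpow_pos_eq by lra. unfold Rpower. rewrite ln_1, Rmult_0_r. apply exp_0. Qed.

Lemma cl_shape k : exists T, cl k = ev 0 :: T /\ last (cl k) (ev 0) = ev k.
Proof.
  induction k as [|k [T [HT Hl]]]. exists []. split; reflexivity.
  exists (T ++ [od k; ev (S k)]). simpl. rewrite HT. split. reflexivity.
  replace ((ev 0 :: T) ++ [od k; ev (S k)]) with (((ev 0 :: T) ++ [od k]) ++ [ev (S k)])
    by (rewrite <- app_assoc; reflexivity).
  apply last_last.
Qed.

Lemma pc_cl k : pathcost al (cl k) = INR k * (rpow a al + 1).
Proof.
  induction k. simpl. ring.
  destruct (cl_shape k) as [T [HT Hl]].
  change (cl (S k)) with (cl k ++ [od k; ev (S k)]). rewrite HT.
  rewrite <- app_comm_cons. rewrite pathcost_app. rewrite <- HT, Hl, IHk.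
  simpl pathcost. unfold ev, od. rewrite !dist_hor.
  replace (e1 + INR k * (1 + a) - (e1 + INR k * (1 + a) + a)) with (- a) by ring.
  replace (e1 + INR k * (1 + a) + a - (e1 + INR (S k) * (1 + a))) with (- 1) by (rewrite S_INR; ring).
  rewrite !Rabs_Ropp, !Rabs_pos_eq by lra. replace (Rabs (-1)) with 1 by (unfold Rabs; destruct Rcase_abs; lra). rewrite rpow_one, S_INR. ring.
Qed.

Lemma seg_pc (f : nat -> point) c j n : (forall t, dist (f t) (f (S t)) = c) ->
  pathcost al (map f (seq j (S n))) = INR n * rpow c al.
Proof.
  intros Hc. revert j. induction n; intros j. simpl. ring.
  change (map f (seq j (S (S n)))) with (f j :: map f (seq (S j) (S n))).
  change (map f (seq (S j) (S n))) with (f (S j) :: map f (seq (S (S j)) n)).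
  change (pathcost al (f j :: f (S j) :: map f (seq (S (S j)) n))) with
    (rpow (dist (f j) (f (S j))) al + pathcost al (f (S j) :: map f (seq (S (S j)) n))).
  change (f (S j) :: map f (seq (S (S j)) n)) with (map f (seq (S j) (S n))).
  rewrite IHn, Hc, S_INR. ring.
Qed.

Lemma last_map_seq (f : nat -> point) j n dd : last (map f (seq j (S n))) dd = f (j + n)%nat.
Proof.
  rewrite seq_S, map_app. apply last_last.
Qed.

Definition c1 := Yt / INR N1.
Definition c2 := (XR + 2 * d) / INR (S n2).
Definition c3 := Yt / INR (S n3).

Lemma INR_Sn_pos n : 0 < INR (S n).
Proof. apply lt_0_INR, Nat.lt_0_succ. Qed.

Lemma pc_rest : pathcost al rest = INR N1 * rpow c1 al + INR (S n2) * rpow c2 al + INR (S n3) * rpow c3 al.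
Proof.
  pose proof INR_N1. pose proof (INR_Sn_pos n2). pose proof (INR_Sn_pos n3). pose proof Yt_pos.
  unfold rest.
  change (map Rp (seq 0 (S N1))) with (Rp 0 :: map Rp (seq 1 N1)).
  change (map Tp (seq 1 (S n2))) with (Tp 1 :: map Tp (seq 2 n2)).
  change (map Lp (seq 1 (S n3))) with (Lp 1 :: map Lp (seq 2 n3)).
  change (pathcost al ((Rp 0 :: map Rp (seq 1 N1)) ++ (Tp 1 :: map Tp (seq 2 n2)) ++ Lp 1 :: map Lp (seq 2 n3)))
    with (pathcost al (Rp 0 :: map Rp (seq 1 N1) ++ Tp 1 :: (map Tp (seq 2 n2) ++ Lp 1 :: map Lp (seq 2 n3)))).
  rewrite pathcost_app. rewrite pathcost_app.
  change (Rp 0 :: map Rp (seq 1 N1)) with (map Rp (seq 0 (S N1))).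
  change (Tp 1 :: map Tp (seq 2 n2)) with (map Tp (seq 1 (S n2))).
  change (Lp 1 :: map Lp (seq 2 n3)) with (map Lp (seq 1 (S n3))).
  rewrite !last_map_seq.
  rewrite (seg_pc Rp c1), (seg_pc Tp c2), (seg_pc Lp c3).
  - assert (Hc2 : 0 < c2) by (unfold c2; apply Rdiv_lt_0_compat; pose proof XR_ge; lra).
    assert (Hc3 : 0 < c3) by (unfold c3; apply Rdiv_lt_0_compat; lra).
    assert (E1 : Rp (0 + N1) = (XR, Yt)) by (unfold Rp; simpl (0 + N1)%nat; f_equal; field; lra).
    assert (E2 : Tp 1 = (XR - c2, Yt)) by (unfold Tp, c2; f_equal; rewrite INR_1; field; lra).
    assert (E3 : Tp (1 + n2) = (- (2 * d), Yt)) by (unfold Tp; simpl (1 + n2)%nat; f_equal; field; lra).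
    assert (E4 : Lp 1 = (- (2 * d), Yt - c3)) by (unfold Lp, c3; f_equal; rewrite INR_1; field; lra).
    rewrite E1, E2, E3, E4, dist_hor, dist_ver.
    replace (XR - (XR - c2)) with c2 by ring. replace (Yt - (Yt - c3)) with c3 by ring.
    rewrite !Rabs_pos_eq by lra. rewrite !S_INR. ring.
  - intros t. unfold Lp. rewrite dist_ver. unfold c3. rewrite (S_INR t).
    replace (Yt - Yt * INR t / INR (S n3) - (Yt - Yt * (INR t + 1) / INR (S n3))) with (Yt / INR (S n3))
      by (field; lra). apply Rabs_pos_eq. apply Rlt_le, Rdiv_lt_0_compat; lra.
  - intros t. unfold Tp. rewrite dist_hor. unfold c2. rewrite (S_INR t).
    pose proof XR_ge.
    replace (XR - (XR + 2 * d) * INR t / INR (S n2) - (XR - (XR + 2 * d) * (INR t + 1) / INR (S n2)))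
      with ((XR + 2 * d) / INR (S n2)) by (field; lra). apply Rabs_pos_eq. apply Rlt_le, Rdiv_lt_0_compat; lra.
  - intros t. unfold Rp. rewrite dist_ver. unfold c1. rewrite (S_INR t).
    replace (Yt * INR t / INR N1 - Yt * (INR t + 1) / INR N1) with (- (Yt / INR N1)) by (field; lra).
    rewrite Rabs_Ropp. apply Rabs_pos_eq. apply Rlt_le, Rdiv_lt_0_compat; lra.
Qed.


Lemma Rp0 : Rp 0 = (XR, 0).
Proof. unfold Rp. f_equal. rewrite INR_0. unfold Rdiv. ring. Qed.

Lemma pc_CR : pathcost al CR = INR m * (rpow a al + 1) + rpow a al + pathcost al rest.
Proof.
  destruct (cl_shape m) as [T [HT Hl]].
  unfold CR. rewrite HT.
  replace rest with (Rp 0 :: (map Rp (seq 1 N1) ++ map Tp (seq 1 (S n2)) ++ map Lp (seq 1 (S n3)))) at 1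
    by reflexivity.
  rewrite <- app_comm_cons. rewrite pathcost_app. rewrite <- HT, Hl, pc_cl.
  change (Rp 0 :: (map Rp (seq 1 N1) ++ map Tp (seq 1 (S n2)) ++ map Lp (seq 1 (S n3)))) with rest.
  rewrite Rp0. unfold ev. rewrite dist_hor. unfold XR.
  replace (e1 + INR m * (1 + a) - (e1 + INR m * (1 + a) + a)) with (- a) by ring.
  rewrite Rabs_Ropp, Rabs_pos_eq by lra. ring.
Qed.

Lemma canon2_feas : feasible s0 P2 (rhoL P2).
Proof. apply feasible_path. apply NoDup_P2. Qed.

Lemma canon2_cost : cost al P2 (rhoL P2) = rpow e1 al + pathcost al CR.
Proof.
  rewrite cost_path by apply NoDup_P2.
  destruct (cl_shape m) as [T [HT Hl]].
  unfold P2. unfold CR at 1. rewrite HT. rewrite <- app_comm_cons.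
  change (pathcost al (s0 :: ev 0 :: T ++ rest)) with (rpow (dist s0 (ev 0)) al + pathcost al (ev 0 :: T ++ rest)).
  rewrite app_comm_cons, <- HT. fold CR.
  unfold s0, ev. rewrite dist_hor. rewrite INR_0.
  replace (0 - (e1 + 0 * (1 + a))) with (- e1) by ring. rewrite Rabs_Ropp, Rabs_pos_eq by lra. reflexivity.
Qed.

Definition L1b := s0 :: pp :: rev CR.

Lemma perm1 : Permutation P1 L1b.
Proof. unfold P1, L1b. apply perm_skip, perm_skip, Permutation_rev. Qed.

Lemma NoDup_L1b : NoDup L1b.
Proof. apply (Permutation_NoDup perm1). apply NoDup_P1. Qed.

Lemma canon1_feas : feasible s0 P1 (rhoL L1b).
Proof.
  apply (feasible_equiv s0 L1b). intros q. split; apply Permutation_in. apply perm1. apply Permutation_sym, perm1.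
  apply feasible_path. apply NoDup_L1b.
Qed.

Lemma CR_snoc : exists CR', CR = CR' ++ [(- (2 * d), 0)].
Proof.
  exists (cl m ++ map Rp (seq 0 (S N1)) ++ map Tp (seq 1 (S n2)) ++ map Lp (seq 1 n3)).
  unfold CR, rest. rewrite (seq_S n3 1), map_app. rewrite !app_assoc. f_equal.
  simpl. f_equal. unfold Lp. f_equal. replace (1 + n3)%nat with (S n3) by lia.
  pose proof (INR_Sn_pos n3). field. lra.
Qed.

Lemma canon1_cost : cost al P1 (rhoL L1b) = 2 * rpow d al + pathcost al CR.
Proof.
  rewrite (cost_perm _ _ _ _ perm1). rewrite cost_path by apply NoDup_L1b.
  destruct CR_snoc as [CR' HC].
  unfold L1b. rewrite <- pathcost_rev with (L := CR). rewrite HC, rev_app_distr. cbn [rev app].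
  change (pathcost al (s0 :: pp :: (- (2 * d), 0) :: rev CR')) with
    (rpow (dist s0 pp) al + (rpow (dist pp (- (2 * d), 0)) al + pathcost al ((- (2 * d), 0) :: rev CR'))).
  unfold s0, pp. rewrite !dist_hor.
  replace (0 - - d) with d by ring. replace (- d - - (2 * d)) with d by ring.
  rewrite Rabs_pos_eq by lra. simpl app. ring.
Qed.


Definition Qf (u : point) : bool := Reqb (snd u) 0 && Rleb 0 (fst u).
Definition Fq (rho : range_assignment) (u : point) (i : nat) : bool := Qf u && Ff L0 a (fst u) (rho u) i.
Definition Fqno (rho : range_assignment) (u : point) (i : nat) : bool :=
  Fq rho u i && negb (Reqb (fst u) (lkk i)).

Lemma lkk_pos i : e1 + a <= lkk i.
Proof. unfold lkk, lk, L0. pose proof (pos_INR i). nra. Qed.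

Lemma rkk_le_XR i : (i < m)%nat -> rkk i <= XR.
Proof.
  intros Hi. unfold rkk, rk, lk, L0, XR. assert (INR i + 1 <= INR m) by (rewrite <- S_INR; apply le_INR; lia).
  nra.
Qed.

Lemma rkk_a_le_XR i : (i < m)%nat -> rkk i + a <= XR.
Proof.
  intros Hi. unfold rkk, rk, lk, L0, XR. assert (INR i + 1 <= INR m) by (rewrite <- S_INR; apply le_INR; lia).
  nra.
Qed.

Lemma rkk_lkk i : rkk i = lkk i + 1.
Proof. reflexivity. Qed.

Lemma dist_s0_CR q : In q CR -> e1 <= dist s0 q.
Proof.
  intros H. apply in_CR in H. destruct H as [H|H].
  - apply reg_cl in H. pose proof (dist_ge_dx s0 q). unfold s0 in *. simpl in *. lra.
  - apply in_rest in H. pose proof (dist_ge_dx s0 q). pose proof (dist_ge_dx' s0 q).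
    pose proof (dist_ge_dy s0 q). pose proof XR_ge. unfold s0, Yt in *. simpl in *. lra.
Qed.

Lemma ev0_in_CR : In (ev 0) CR.
Proof. unfold CR. apply in_or_app. left. apply ev_in_cl. lia. Qed.

Lemma LB2 (rho : range_assignment) : nonneg_ranges rho -> feasible s0 P2 rho ->
  (forall u, In u P2 -> rho u < 2 * d) ->
  rpow e1 al + INR m + a * INR (cnt (fun i => negb (Rleb 1 (rho (od i)))) m) <= cost al P2 rho.
Proof.
  intros Hnn Hfe Hlt.
  assert (Hs : e1 <= rho s0).
  { destruct (cut_lemma s0 P2 rho (fun q => q <> s0) (ev 0) Hfe) as [q [u [Hq [Hq' [Hu [Hu' Hd]]]]]].
    - right. apply ev0_in_CR.
    - intro E. apply (f_equal fst) in E. unfold ev, s0 in E. simpl in E. rewrite Rmult_0_l in E. lra.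
    - intro H. apply H. reflexivity.
    - apply NNPP in Hu'. subst u. apply in_P2 in Hq. destruct Hq as [Hq|Hq]. contradiction.
      pose proof (dist_s0_CR q Hq). lra. }
  assert (Hlink : forall i, (i < m)%nat -> exists u, In u P2 /\ Fq rho u i = true /\
             (rho (od i) < 1 -> Fqno rho u i = true)).
  { intros i Hi.
    destruct (cut_lemma s0 P2 rho (fun q => ~ (snd q = 0 /\ 0 <= fst q /\ fst q <= lkk i)) (ev (S i)) Hfe)
      as [q [u [Hq [Hq' [Hu [Hu' Hd]]]]]].
    - right. unfold CR. apply in_or_app. left. apply ev_in_cl. lia.
    - rewrite fst_ev_S. rewrite rkk_lkk. lra.
    - intro H. apply H. unfold s0. simpl. pose proof (lkk_pos i). lra.
    - apply NNPP in Hu'. destruct Hu' as [Hu1 [Hu2 Hu3]].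
      assert (Hr : rkk i - fst u <= rho u).
      { apply in_P2 in Hq. destruct Hq as [Hq|Hq].
        - exfalso. apply Hq'. subst. unfold s0. simpl. pose proof (lkk_pos i). lra.
        - apply in_CR in Hq. destruct Hq as [Hq|Hq].
          + pose proof (reg_cl q Hq) as [Hq1 [Hq2 Hq3]].
            assert (lkk i < fst q). { destruct (Rle_dec (fst q) (lkk i)). exfalso. apply Hq'. lra. lra. }
            pose proof (K1 m q i Hq H). pose proof (dist_ge_dx u q). lra.
          + apply in_rest in Hq. pose proof (dist_ge_dx u q). pose proof (dist_ge_dx' u q).
            pose proof (dist_ge_dy u q). pose proof (rkk_le_XR i Hi). pose proof (Hlt u Hu).
            unfold Yt in *. lra. }
      exists u. split. exact Hu.
      assert (HF : Fq rho u i = true).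
      { unfold Fq, Qf, Ff. rewrite (proj2 (Reqb_iff _ _) Hu1), (proj2 (Rleb_iff _ _) Hu2).
        fold (lkk i). rewrite (proj2 (Rleb_iff _ _) Hu3). fold (rkk i).
        rewrite (proj2 (Rleb_iff _ _)) by lra. reflexivity. }
      split. exact HF. intros Hod. unfold Fqno. rewrite HF. simpl.
      destruct (Reqb (fst u) (lkk i)) eqn:E; [|reflexivity].
      apply Reqb_iff in E. exfalso.
      assert (u = od i). { destruct u as [ux uy]. simpl in Hu1, E. subst ux uy. unfold od, lkk, lk, L0. f_equal. ring. }
      subst u. rewrite fst_od in Hr. rewrite rkk_lkk in Hr. lra. }
  set (g1 := fun u => cnt (Fq rho u) m). set (g2 := fun u => cnt (Fqno rho u) m).
  assert (Hu3 : forall u, In u CR -> INR (g1 u) + a * INR (g2 u) <= rpow (rho u) al).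
  { intros u HuC. unfold g1, g2.
    destruct (Qf u) eqn:EQ.
    - unfold Qf in EQ. apply andb_prop in EQ. destruct EQ as [E1 E2].
      apply Reqb_iff in E1. apply Rleb_iff in E2.
      rewrite (cnt_ext (Fq rho u) (Ff L0 a (fst u) (rho u))) by (intros; unfold Fq, Qf;
        rewrite (proj2 (Reqb_iff _ _) E1), (proj2 (Rleb_iff _ _) E2); reflexivity).
      rewrite (cnt_ext (Fqno rho u) (Ffno L0 a (fst u) (rho u))) by (intros; unfold Fqno, Ffno, Fq, Qf;
        rewrite (proj2 (Reqb_iff _ _) E1), (proj2 (Rleb_iff _ _) E2); reflexivity).
      destruct (Rle_dec 1 (rho u)) as [H1|H1].
      + eapply Rle_trans; [|apply rpow_ge_self; lra].
        apply LLf. exact Ha0. apply Hnn.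
        intros i Hi Hle. apply in_CR in HuC. destruct HuC as [HuC|HuC].
        * apply (K2 m u i HuC Hle).
        * apply in_rest in HuC. pose proof (rkk_le_XR i Hi). unfold rkk, rk in *. fold (lkk i) in *.
          unfold Yt in *. lra.
      + rewrite !cnt_zero. simpl. pose proof (rpow_nonneg (rho u) al). lra.
        * intros i Hi. unfold Ffno, Ff. destruct (Rleb (fst u) (lk L0 a i)) eqn:A1; simpl; [|reflexivity].
          destruct (Rleb (rk L0 a i) (fst u + rho u)) eqn:A2; simpl; [|reflexivity].
          apply Rleb_iff in A1, A2. unfold rk in A2. lra.
        * intros i Hi. unfold Ff. destruct (Rleb (fst u) (lk L0 a i)) eqn:A1; simpl; [|reflexivity].
          destruct (Rleb (rk L0 a i) (fst u + rho u)) eqn:A2; simpl; [|reflexivity].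
          apply Rleb_iff in A1, A2. unfold rk in A2. lra.
    - rewrite !cnt_zero. simpl. pose proof (rpow_nonneg (rho u) al). lra.
      + intros i Hi. unfold Fqno, Fq. rewrite EQ. reflexivity.
      + intros i Hi. unfold Fq. rewrite EQ. reflexivity. }
  assert (Hs3 : INR (g1 s0) + a * INR (g2 s0) <= rho s0 - e1).
  { unfold g1, g2.
    rewrite (cnt_ext (Fq rho s0) (Ff L0 a e1 (rho s0 - e1))).
    rewrite (cnt_ext (Fqno rho s0) (Ffno L0 a e1 (rho s0 - e1))).
    - apply LLf. exact Ha0. lra. intros i Hi Hle. right. fold (lkk i). pose proof (lkk_pos i). lra.
    - intros i Hi. unfold Fqno, Ffno, Fq, Qf, Ff, s0. simpl fst. simpl snd. pose proof (lkk_pos i).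
      unfold lkk in *. rewrite (proj2 (Reqb_iff 0 0)) by reflexivity.
      rewrite (proj2 (Rleb_iff 0 0)) by lra. rewrite (proj2 (Rleb_iff 0 _)) by lra.
      rewrite (proj2 (Rleb_iff e1 _)) by lra. replace (e1 + (rho (0, 0) - e1)) with (0 + rho (0,0)) by ring.
      rewrite (proj2 (Reqb_false 0 _)) by lra. rewrite (proj2 (Reqb_false e1 _)) by lra. reflexivity.
    - intros i Hi. unfold Fq, Qf, Ff, s0. simpl fst. simpl snd. pose proof (lkk_pos i).
      unfold lkk in *. rewrite (proj2 (Reqb_iff 0 0)) by reflexivity.
      rewrite (proj2 (Rleb_iff 0 0)) by lra. rewrite (proj2 (Rleb_iff 0 _)) by lra.
      rewrite (proj2 (Rleb_iff e1 _)) by lra. replace (e1 + (rho (0, 0) - e1)) with (0 + rho (0,0)) by ring.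
      reflexivity. }
  assert (Hrs : rpow e1 al + (rho s0 - e1) <= rpow (rho s0) al).
  { replace (rho s0) with (e1 + (rho s0 - e1)) at 2 by ring. apply rpow_lin; lra. }
  assert (HC : INR (lsum CR g1) + a * INR (lsum CR g2) <= cost al CR rho) by (apply cost_lb_cnt; exact Hu3).
  assert (Hcost : cost al P2 rho = rpow (rho s0) al + cost al CR rho) by reflexivity.
  assert (Hsum1 : (m <= lsum P2 g1)%nat).
  { unfold g1. rewrite exchange. rewrite <- (cnt_true m) at 1. apply csum_ge.
    intros i Hi _. destruct (Hlink i Hi) as [u [Hu [HF _]]]. eapply lcount_ge1; eauto. }
  assert (Hsum2 : (cnt (fun i => negb (Rleb 1 (rho (od i)))) m <= lsum P2 g2)%nat).
  { unfold g2. rewrite exchange. apply csum_ge.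
    intros i Hi Hb. apply negb_true_iff, Rleb_false in Hb.
    destruct (Hlink i Hi) as [u [Hu [_ HF]]]. eapply lcount_ge1; eauto. }
  apply le_INR in Hsum1. apply le_INR in Hsum2.
  assert (HP2 : lsum P2 g1 = (g1 s0 + lsum CR g1)%nat) by reflexivity.
  assert (HP2' : lsum P2 g2 = (g2 s0 + lsum CR g2)%nat) by reflexivity.
  rewrite HP2, plus_INR in Hsum1. rewrite HP2', plus_INR in Hsum2.
  nra.
Qed.


Definition Qb (u : point) : bool := (Reqb (snd u) 0 || Reqb (fst u) XR) && Rleb e1 (fst u).
Definition Gb (rho : range_assignment) (u : point) (i : nat) : bool := Qb u && Fb L0 a (fst u) (rho u) i.

Lemma Gb_small rho u i : rho u < 1 -> Gb rho u i = false.
Proof.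
  intros H. unfold Gb, Fb. destruct (Qb u); simpl; [|reflexivity].
  destruct (Rleb (rk L0 a i) (fst u)) eqn:A1; simpl; [|reflexivity].
  destruct (Rleb (fst u - rho u) (lk L0 a i)) eqn:A2; [|reflexivity].
  apply Rleb_iff in A1, A2. unfold rk in A1. lra.
Qed.

Lemma Gb_LL rho u : nonneg_ranges rho -> In u CR -> Qb u = true ->
  INR (cnt (Gb rho u) m) + a * INR (cnt (Fbno L0 a (fst u) (rho u)) m) <= rho u.
Proof.
  intros Hnn HuC EQ.
  rewrite (cnt_ext (Gb rho u) (Fb L0 a (fst u) (rho u))) by (intros; unfold Gb; rewrite EQ; reflexivity).
  apply LLb. exact Ha0. apply Hnn.
  unfold Qb in EQ. apply andb_prop in EQ. destruct EQ as [E1 E2]. apply Rleb_iff in E2.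
  intros i Hi Hle. apply in_CR in HuC. destruct HuC as [HuC|HuC].
  - apply (K3 m u i HuC Hle).
  - right. pose proof (rkk_a_le_XR i Hi). apply in_rest in HuC. apply orb_prop in E1.
    destruct E1 as [E1|E1]; apply Reqb_iff in E1; unfold rkk in *; unfold Yt in *; lra.
Qed.

Lemma dist_pp_CR q : In q CR -> d <= dist pp q.
Proof.
  intros H. apply in_CR in H. destruct H as [H|H].
  - apply reg_cl in H. pose proof (dist_ge_dx pp q). unfold pp in *. simpl in *. lra.
  - apply in_rest in H. pose proof (dist_ge_dx pp q). pose proof (dist_ge_dx' pp q).
    pose proof (dist_ge_dy pp q). pose proof XR_ge. unfold pp, Yt in *. simpl in *. lra.
Qed.

Lemma LB1 (rho : range_assignment) : nonneg_ranges rho -> feasible s0 P1 rho ->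
  (forall u, In u P1 -> rho u < 2 * d) -> rho s0 < e1 ->
  2 * rpow d al + INR m + a * INR (cnt (fun i => Rleb 1 (rho (od i))) m) <= cost al P1 rho.
Proof.
  intros Hnn Hfe Hlt Hs.
  assert (HppP1 : In pp P1) by (unfold P1; simpl; auto).
  assert (HCRP1 : forall q, In q CR -> In q P1) by (intros; unfold P1; simpl; auto).
  assert (Hs1 : d <= rho s0).
  { destruct (cut_lemma s0 P1 rho (fun q => q <> s0) pp Hfe) as [q [u [Hq [Hq' [Hu [Hu' Hd]]]]]].
    - exact HppP1.
    - intro E. apply (f_equal fst) in E. unfold pp, s0 in E. simpl in E. lra.
    - intro H. apply H. reflexivity.
    - apply NNPP in Hu'. subst u. apply in_P1 in Hq. destruct Hq as [Hq|[Hq|Hq]]. contradiction.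
      + subst q. pose proof (dist_ge_dx' s0 pp). unfold s0, pp in *. simpl in *. lra.
      + pose proof (dist_s0_CR q Hq). lra. }
  assert (Hp1 : d <= rho pp).
  { destruct (cut_lemma s0 P1 rho (fun q => q <> s0 /\ q <> pp) (ev 0) Hfe) as [q [u [Hq [Hq' [Hu [Hu' Hd]]]]]].
    - apply HCRP1, ev0_in_CR.
    - split; intro E; apply (f_equal fst) in E; unfold ev, pp, s0 in E; simpl in E; rewrite Rmult_0_l in E; lra.
    - intros [H _]. apply H. reflexivity.
    - apply in_P1 in Hq. destruct Hq as [Hq|[Hq|Hq]]; try (exfalso; destruct Hq'; contradiction).
      destruct (classic (u = s0)) as [E|E].
      + subst u. pose proof (dist_s0_CR q Hq). lra.
      + destruct (classic (u = pp)) as [E'|E'].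
        * subst u. pose proof (dist_pp_CR q Hq). lra.
        * exfalso. apply Hu'. auto. }
  assert (Hlink : forall i, (i < m)%nat -> exists u, In u CR /\ Gb rho u i = true).
  { intros i Hi.
    destruct (cut_lemma s0 P1 rho (fun q => snd q = 0 /\ e1 <= fst q /\ fst q <= lkk i) (ev 0) Hfe)
      as [q [u [Hq [[Hq1 [Hq2 Hq3]] [Hu [Hu' Hd]]]]]].
    - apply HCRP1, ev0_in_CR.
    - unfold ev. simpl. rewrite Rmult_0_l. pose proof (lkk_pos i). lra.
    - unfold s0. simpl. lra.
    - apply in_P1 in Hu. destruct Hu as [Hu|[Hu|Hu]].
      + subst u. pose proof (dist_ge_dx s0 q). unfold s0 in *. simpl in *. lra.
      + subst u. pose proof (dist_ge_dx pp q). pose proof (Hlt pp HppP1). unfold pp in *. simpl in *. lra.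
      + exists u. split. exact Hu.
        pose proof (Hlt u (HCRP1 u Hu)) as Hlu.
        assert (Hgeo : (snd u = 0 \/ fst u = XR) /\ e1 <= fst u /\ rkk i <= fst u).
        { apply in_CR in Hu. destruct Hu as [Hu|Hu].
          - pose proof (reg_cl u Hu) as [Hu1 [Hu2 Hu3]].
            assert (lkk i < fst u). { destruct (Rle_dec (fst u) (lkk i)). exfalso. apply Hu'. lra. lra. }
            pose proof (K1 m u i Hu H). lra.
          - apply in_rest in Hu. pose proof (dist_ge_dx u q). pose proof (dist_ge_dx' u q).
            pose proof (dist_ge_dy' u q). pose proof (rkk_le_XR i Hi). pose proof XR_ge.
            unfold Yt in *. lra. }
        destruct Hgeo as [Hg1 [Hg2 Hg3]].
        pose proof (dist_ge_dx' u q).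
        unfold Gb, Qb, Fb. rewrite (proj2 (Rleb_iff e1 _) Hg2).
        assert (Hor : (Reqb (snd u) 0 || Reqb (fst u) XR) = true).
        { destruct Hg1 as [Hg1|Hg1]; apply orb_true_iff; [left|right]; apply Reqb_iff; auto. }
        rewrite Hor. fold (rkk i). rewrite (proj2 (Rleb_iff _ _) Hg3).
        fold (lkk i). rewrite (proj2 (Rleb_iff _ _)) by lra. reflexivity. }
  set (g := fun u => cnt (Gb rho u) m).
  assert (Hgen : forall u, In u CR -> INR (g u) <= rpow (rho u) al).
  { intros u HuC. unfold g. destruct (Qb u) eqn:EQ.
    - destruct (Rle_dec 1 (rho u)) as [H1|H1].
      + pose proof (Gb_LL rho u Hnn HuC EQ). pose proof (pos_INR (cnt (Fbno L0 a (fst u) (rho u)) m)).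
        pose proof (rpow_ge_self al (rho u) ltac:(lra) H1). nra.
      + rewrite cnt_zero. simpl. apply rpow_nonneg. intros. apply Gb_small. lra.
    - rewrite cnt_zero. simpl. apply rpow_nonneg. intros. unfold Gb. rewrite EQ. reflexivity. }
  assert (Hod : forall j, (j < m)%nat ->
     INR (g (od j)) + a * (if Rleb 1 (rho (od j)) then 1 else 0) <= rpow (rho (od j)) al).
  { intros j Hj. unfold g.
    assert (HodC : In (od j) CR) by (unfold CR; apply in_or_app; left; apply od_in_cl; auto).
    assert (EQ : Qb (od j) = true).
    { unfold Qb, od. simpl. rewrite (proj2 (Reqb_iff 0 0)) by reflexivity. simpl.
      apply Rleb_iff. pose proof (pos_INR j). nra. }
    destruct (Rleb 1 (rho (od j))) eqn:E1.
    - apply Rleb_iff in E1. pose proof (Gb_LL rho (od j) Hnn HodC EQ) as HL.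
      rewrite (cnt_ext (Fbno L0 a (fst (od j)) (rho (od j))) (Gb rho (od j))) in HL.
      + pose proof (rpow_ge_self al (rho (od j)) ltac:(lra) E1).
        destruct (cnt (Gb rho (od j)) m) as [|c]. simpl in *. lra.
        rewrite S_INR in *. pose proof (pos_INR c). nra.
      + intros i Hi. unfold Fbno, Gb. rewrite EQ. simpl.
        rewrite (proj2 (Reqb_false _ _)) by (apply K5). apply andb_true_r.
    - apply Rleb_false in E1. rewrite cnt_zero. simpl. rewrite Rmult_0_r, Rplus_0_r. apply rpow_nonneg.
      intros. apply Gb_small. lra. }
  assert (Hcl : forall k, (k <= m)%nat ->
     INR (lsum (cl k) g) + a * INR (cnt (fun i => Rleb 1 (rho (od i))) k) <= cost al (cl k) rho).
  { induction k as [|k IH]; intros Hk.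
    - simpl. rewrite Nat.add_0_r. pose proof (Hgen (ev 0) ev0_in_CR). lra.
    - specialize (IH ltac:(lia)). simpl cl. rewrite lsum_app, cost_app. simpl cnt.
      simpl lsum. simpl cost. rewrite !plus_INR.
      pose proof (Hod k ltac:(lia)).
      assert (HevC : In (ev (S k)) CR) by (unfold CR; apply in_or_app; left; apply ev_in_cl; auto).
      pose proof (Hgen (ev (S k)) HevC).
      destruct (Rleb 1 (rho (od k))); simpl INR; lra. }
  assert (Hrest : INR (lsum rest g) + 0 * INR (lsum rest g) <= cost al rest rho).
  { apply cost_lb_cnt. intros u Hu. rewrite Rmult_0_l, Rplus_0_r. apply Hgen.
    unfold CR. apply in_or_app. right. auto. }
  assert (Hsum : (m <= lsum CR g)%nat).
  { unfold g. rewrite exchange. rewrite <- (cnt_true m) at 1. apply csum_ge.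
    intros i Hi _. destruct (Hlink i Hi) as [u [Hu HF]]. eapply lcount_ge1; eauto. }
  apply le_INR in Hsum. unfold CR in Hsum. rewrite lsum_app, plus_INR in Hsum.
  specialize (Hcl m (le_n m)).
  assert (Hcost : cost al P1 rho = rpow (rho s0) al + (rpow (rho pp) al + (cost al (cl m) rho + cost al rest rho))).
  { unfold P1, CR. simpl. rewrite cost_app. reflexivity. }
  pose proof (rpow_mono al d (rho s0) ltac:(lra) Hs1).
  pose proof (rpow_mono al d (rho pp) ltac:(lra) Hp1).
  lra.
Qed.


Lemma remove_P1 : remove point_eq_dec pp P1 = P2.
Proof.
  unfold P1, P2. cbn [remove].
  destruct (point_eq_dec pp s0) as [E|E].
  - exfalso. apply (f_equal fst) in E. unfold pp, s0 in E. simpl in E. lra.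
  - destruct (point_eq_dec pp pp) as [_|E']; [|congruence].
    rewrite notin_remove by apply pp_notin_CR. reflexivity.
Qed.

Lemma od_inj i j : od i = od j -> i = j.
Proof.
  intros E. apply (f_equal fst) in E. unfold od in E. simpl in E. apply INR_eq. nra.
Qed.

Lemma od_in_P2 i : (i < m)%nat -> In (od i) P2.
Proof. intros. right. unfold CR. apply in_or_app. left. apply od_in_cl. auto. Qed.

Lemma master (A : algorithm) (k : nat) (eps : R) :
  correct_algorithm A -> k_stable k A -> approx al eps A -> 0 <= eps ->
  (1 + eps) * (rpow e1 al + pathcost al CR) < rpow (2 * d) al ->
  (1 + eps) * (2 * rpow d al + pathcost al CR) < rpow e1 al ->
  a * INR m <= a * INR k + (eps * (rpow e1 al + pathcost al CR) + pathcost al CR - INR m)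
     + (eps * (2 * rpow d al + pathcost al CR) + pathcost al CR - INR m).
Proof.
  intros Hc Hk Happ Heps B1 B2.
  set (h1 := map Ins (rev (pp :: CR))).
  assert (Hcur1 : curset s0 h1 = P1) by (apply curset_ins).
  assert (Hv1 : valid_history s0 h1) by (apply valid_ins, NoDup_P1).
  set (h2 := Del pp :: h1).
  assert (Hcur2 : curset s0 h2 = P2).
  { unfold h2. simpl. rewrite Hcur1. apply remove_P1. }
  assert (Hv2 : valid_history s0 h2).
  { unfold h2. simpl. split. exact Hv1. rewrite Hcur1. split.
    intro E. apply (f_equal fst) in E. unfold pp, s0 in E. simpl in E. lra.
    unfold P1. simpl. auto. }
  set (r1 := A s0 h1). set (r2 := A s0 h2).
  destruct (Hc s0 h1 Hv1) as [Hnn1 [Hfe1 _]]. rewrite Hcur1 in Hfe1.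
  destruct (Hc s0 h2 Hv2) as [Hnn2 [Hfe2 _]]. rewrite Hcur2 in Hfe2.
  assert (Hc1 : cost al P1 r1 <= (1 + eps) * (2 * rpow d al + pathcost al CR)).
  { pose proof (Happ s0 h1 Hv1) as W. rewrite Hcur1 in W.
    rewrite <- (canon1_cost). apply W. apply rhoL_nonneg. apply canon1_feas. }
  assert (Hc2 : cost al P2 r2 <= (1 + eps) * (rpow e1 al + pathcost al CR)).
  { pose proof (Happ s0 h2 Hv2) as W. rewrite Hcur2 in W.
    rewrite <- (canon2_cost). apply W. apply rhoL_nonneg. apply canon2_feas. }
  assert (Hr2d : rpow e1 al < rpow (2 * d) al) by (apply rpow_strict; lra).
  assert (X2 : forall u, In u P2 -> r2 u < 2 * d).
  { intros u Hu. destruct (Rlt_dec (r2 u) (2 * d)) as [H|H]; [exact H|exfalso].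
    pose proof (rpow_mono al (2 * d) (r2 u) ltac:(lra) ltac:(lra)).
    pose proof (cost_ge_elem al P2 r2 u Hu). lra. }
  assert (X1 : forall u, In u P1 -> r1 u < 2 * d).
  { intros u Hu. destruct (Rlt_dec (r1 u) (2 * d)) as [H|H]; [exact H|exfalso].
    pose proof (rpow_mono al (2 * d) (r1 u) ltac:(lra) ltac:(lra)).
    pose proof (cost_ge_elem al P1 r1 u Hu). lra. }
  assert (X1s : r1 s0 < e1).
  { destruct (Rlt_dec (r1 s0) e1) as [H|H]; [exact H|exfalso].
    pose proof (rpow_mono al e1 (r1 s0) ltac:(lra) ltac:(lra)).
    pose proof (cost_ge_elem al P1 r1 s0 ltac:(unfold P1; simpl; auto)). lra. }
  pose proof (LB2 r2 Hnn2 Hfe2 X2) as L2.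
  pose proof (LB1 r1 Hnn1 Hfe1 X1 X1s) as L1.
  set (bad := fun i => negb (Rleb 1 (r2 (od i)))) in *.
  set (big := fun i => Rleb 1 (r1 (od i))) in *.
  set (chg := fun i => Rleb 1 (r2 (od i)) && negb (Rleb 1 (r1 (od i)))).
  destruct (Hk s0 (Del pp) h1 Hv2) as [L [HL HLin]].
  assert (Hchg : (cnt chg m <= length L)%nat).
  { apply cnt_inj_incl with (g := od).
    - intros i Hi Hch. apply HLin. unfold chg in Hch. apply andb_prop in Hch.
      destruct Hch as [E1 E2]. apply Rleb_iff in E1. apply negb_true_iff, Rleb_false in E2.
      fold h2. fold r2. fold r1. lra.
    - intros i j _ _ E. apply od_inj. exact E. }
  assert (Hcov : (m <= cnt chg m + cnt bad m + cnt big m)%nat).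
  { rewrite <- (cnt_true m) at 1.
    eapply Nat.le_trans. apply (cnt_mono _ (fun i => chg i || (bad i || big i))).
    - intros i _ _. unfold chg, bad, big. destruct (Rleb 1 (r2 (od i))), (Rleb 1 (r1 (od i))); reflexivity.
    - eapply Nat.le_trans. apply cnt_or. pose proof (cnt_or bad big m). lia. }
  apply le_INR in Hchg. apply le_INR in Hcov. apply le_INR in HL.
  rewrite !plus_INR in Hcov.
  assert (a * INR m <= a * (INR (cnt chg m) + INR (cnt bad m) + INR (cnt big m))) by (apply Rmult_le_compat_l; lra).
  nra.
Qed.

End Geo.


Lemma Rpower_inv_pow x y : 0 < x -> 0 < y -> Rpower (Rpower x (/ y)) y = x.
Proof. intros. rewrite Rpower_mult. replace (/ y * y) with 1 by (field; lra). apply Rpower_1; lra. Qed.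

Lemma Rpower_one_base x : Rpower 1 x = 1.
Proof. unfold Rpower. rewrite ln_1, Rmult_0_r. apply exp_0. Qed.

Theorem theorem7 (alpha : R) (Halpha : 1 < alpha) : ~ has_SAS alpha.
Proof.
  intros HS.
  set (al := alpha) in *.
  set (be := Rpower 2 (al - 1)).
  assert (Hbe : 1 < be).
  { pose proof (Rpower_lt 2 0 (al - 1) ltac:(lra) ltac:(lra)) as H. rewrite Rpower_O in H by lra.
    unfold be. lra. }
  set (ga := be - 1).
  assert (Hga : 0 < ga) by (unfold ga; lra).
  set (a := Rpower (/ 100) (/ (al - 1))).
  assert (Hapow : Rpower a (al - 1) = / 100) by (apply Rpower_inv_pow; lra).
  assert (Ha0 : 0 < a) by apply Rpower_pos'.
  assert (Ha1 : a < 1).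
  { destruct (Rlt_dec a 1) as [H|H]; [exact H|exfalso].
    pose proof (Rpower_ge1 a (al - 1) ltac:(lra) ltac:(lra)). lra. }
  assert (Hra : rpow a al = a / 100).
  { rewrite rpow_pos_eq by lra. rewrite Rpower_split by lra. rewrite Hapow. field. }
  set (K := 6 / ga + 1).
  assert (HK1 : 1 <= K) by (unfold K; assert (0 < 6 / ga) by (apply Rdiv_lt_0_compat; lra); lra).
  assert (HgK : ga * K = 6 + ga) by (unfold K; field; lra).
  set (Q := (1 + be) * K + 4).
  assert (HQ : 0 < Q) by (unfold Q; nra).
  set (eps := a / (100 * Q)).
  assert (Heps : 0 < eps) by (unfold eps; apply Rdiv_lt_0_compat; lra).
  assert (HepsQ : eps * Q = a / 100) by (unfold eps; field; lra).
  set (sgp := a / (100 * (8 * K + 3))).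
  assert (Hsgp : 0 < sgp) by (unfold sgp; apply Rdiv_lt_0_compat; lra).
  set (sg := Rpower sgp (/ (al - 1))).
  assert (Hsg : Rpower sg (al - 1) = sgp) by (apply Rpower_inv_pow; lra).
  assert (Hsg0 : 0 < sg) by apply Rpower_pos'.
  destruct (HS eps Heps) as [k [A [Hc [Hk Happ]]]].
  set (m := (2 * k + 2)%nat).
  assert (Hm : INR m = 2 * INR k + 2).
  { unfold m. rewrite plus_INR, mult_INR. simpl. ring. }
  pose proof (pos_INR k) as Hk0.
  set (D := K * INR m).
  assert (HD : 1 <= D) by (unfold D; nra).
  set (d := Rpower D (/ al)).
  assert (Hd0 : 0 < d) by apply Rpower_pos'.
  assert (HdD : Rpower d al = D) by (apply Rpower_inv_pow; lra).
  set (E := (1 + be) * D).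
  set (e1 := Rpower E (/ al)).
  assert (He0 : 0 < e1) by apply Rpower_pos'.
  assert (HeE : Rpower e1 al = E) by (apply Rpower_inv_pow; unfold E; nra).
  assert (Hd1 : 1 <= d).
  { destruct (Rle_dec 1 d) as [H|H]; [exact H|exfalso].
    pose proof (Rlt_Rpower_l d 1 al ltac:(lra) ltac:(lra)). rewrite Rpower_one_base in H0. lra. }
  assert (HdleD : d <= D).
  { rewrite <- HdD. rewrite <- (Rpower_1 d) at 1 by lra. apply Rle_Rpower; lra. }
  assert (Hde : d <= e1).
  { destruct (Rle_dec d e1) as [H|H]; [exact H|exfalso].
    pose proof (Rlt_Rpower_l e1 d al ltac:(lra) ltac:(lra)). rewrite HdD, HeE in H0. unfold E in H0. nra. }
  assert (H2d : Rpower (2 * d) al = 2 * be * D).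
  { rewrite <- Rpower_mult_distr by lra. rewrite HdD. rewrite (Rpower_split 2) by lra. fold be. ring. }
  assert (He2 : e1 < 2 * d).
  { destruct (Rlt_dec e1 (2 * d)) as [H|H]; [exact H|exfalso].
    pose proof (Rle_Rpower_l (2 * d) e1 al ltac:(lra) ltac:(lra)). rewrite H2d, HeE in H0. unfold E in H0. nra. }
  destruct (INR_unbounded (2 * d / sg)) as [n1 Hn1].
  destruct (INR_unbounded ((XR a e1 m + 2 * d) / sg)) as [n2 Hn2].
  destruct (INR_unbounded (2 * d / sg)) as [n3 Hn3].
  set (N1 := S n1).
  assert (HN1 : (1 <= N1)%nat) by (unfold N1; lia).
  pose proof (XR_ge a e1 m Ha0) as HXR.
  assert (HXRu : XR a e1 m <= 2 * d + 2 * INR m + 1).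
  { unfold XR. pose proof (pos_INR m). nra. }
  set (PCR := pathcost al (CR a e1 d m N1 n2 n3)).
  assert (Hrs : forall c, 0 < c -> c <= sg -> rpow c al <= c * sgp).
  { intros c Hc0 Hc1. rewrite <- Hsg. apply rpow_small; lra. }
  assert (Hrest : pathcost al (rest a e1 d m N1 n2 n3) <= sgp * ((8 * K + 3) * INR m)).
  { rewrite pc_rest by (auto; lra).
    assert (HN1p : 0 < INR N1) by (unfold N1; apply lt_0_INR; lia).
    assert (HS2 : 0 < INR (S n2)) by (apply lt_0_INR; lia).
    assert (HS3 : 0 < INR (S n3)) by (apply lt_0_INR; lia).
    assert (Hc1 : 0 < c1 d N1 <= sg).
    { unfold c1, Yt. split. apply Rdiv_lt_0_compat; lra.
      apply (Rmult_le_reg_r (INR N1)). lra. unfold Rdiv. rewrite Rmult_assoc, Rinv_l by lra.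
      unfold N1. rewrite S_INR. apply (Rmult_lt_compat_r sg) in Hn1; [|lra].
      unfold Rdiv in Hn1. rewrite Rmult_assoc, Rinv_l, Rmult_1_r in Hn1 by lra. nra. }
    assert (Hc2 : 0 < c2 a e1 d m n2 <= sg).
    { unfold c2. split. apply Rdiv_lt_0_compat; lra.
      apply (Rmult_le_reg_r (INR (S n2))). lra. unfold Rdiv. rewrite Rmult_assoc, Rinv_l by lra.
      rewrite S_INR. apply (Rmult_lt_compat_r sg) in Hn2; [|lra].
      unfold Rdiv in Hn2. rewrite Rmult_assoc, Rinv_l, Rmult_1_r in Hn2 by lra. nra. }
    assert (Hc3 : 0 < c3 d n3 <= sg).
    { unfold c3, Yt. split. apply Rdiv_lt_0_compat; lra.
      apply (Rmult_le_reg_r (INR (S n3))). lra. unfold Rdiv. rewrite Rmult_assoc, Rinv_l by lra.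
      rewrite S_INR. apply (Rmult_lt_compat_r sg) in Hn3; [|lra].
      unfold Rdiv in Hn3. rewrite Rmult_assoc, Rinv_l, Rmult_1_r in Hn3 by lra. nra. }
    pose proof (Hrs _ (proj1 Hc1) (proj2 Hc1)). pose proof (Hrs _ (proj1 Hc2) (proj2 Hc2)).
    pose proof (Hrs _ (proj1 Hc3) (proj2 Hc3)).
    assert (E1 : INR N1 * c1 d N1 = 2 * d) by (unfold c1, Yt; field; lra).
    assert (E2 : INR (S n2) * c2 a e1 d m n2 = XR a e1 m + 2 * d) by (unfold c2; field; lra).
    assert (E3 : INR (S n3) * c3 d n3 = 2 * d) by (unfold c3, Yt; field; lra).
    assert (T1 : INR N1 * rpow (c1 d N1) al <= 2 * d * sgp).
    { rewrite <- E1. rewrite Rmult_assoc. apply Rmult_le_compat_l; lra. }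
    assert (T2 : INR (S n2) * rpow (c2 a e1 d m n2) al <= (XR a e1 m + 2 * d) * sgp).
    { rewrite <- E2. rewrite Rmult_assoc. apply Rmult_le_compat_l; lra. }
    assert (T3 : INR (S n3) * rpow (c3 d n3) al <= 2 * d * sgp).
    { rewrite <- E3. rewrite Rmult_assoc. apply Rmult_le_compat_l; lra. }
    assert (6 * d + XR a e1 m <= (8 * K + 3) * INR m).
    { unfold D in HdleD. nra. }
    nra. }
  assert (Hsm : sgp * ((8 * K + 3) * INR m) = a / 100 * INR m) by (unfold sgp; field; nra).
  assert (HPCR : PCR <= INR m + 3 * (a / 100) * INR m).
  { unfold PCR. rewrite pc_CR by lra. rewrite Hra. nra. }
  assert (HPCR0 : 0 <= PCR).
  { unfold PCR. rewrite pc_CR by lra. rewrite Hra.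
    assert (0 <= pathcost al (rest a e1 d m N1 n2 n3)).
    { rewrite pc_rest by (auto; lra). pose proof (rpow_nonneg (c1 d N1) al).
      pose proof (rpow_nonneg (c2 a e1 d m n2) al). pose proof (rpow_nonneg (c3 d n3) al).
      pose proof (pos_INR N1). pose proof (pos_INR (S n2)). pose proof (pos_INR (S n3)). nra. }
    pose proof (pos_INR m). nra. }
  assert (Hrd : rpow d al = D) by (rewrite rpow_pos_eq by lra; exact HdD).
  assert (Hre : rpow e1 al = E) by (rewrite rpow_pos_eq by lra; exact HeE).
  assert (Hr2 : rpow (2 * d) al = 2 * be * D) by (rewrite rpow_pos_eq by lra; exact H2d).
  assert (HepsE : eps * (E + PCR) <= a / 100 * INR m).
  { rewrite <- HepsQ. rewrite Rmult_assoc. apply Rmult_le_compat_l. lra.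
    unfold Q, E, D. nra. }
  assert (HepsD : eps * (2 * D + PCR) <= a / 100 * INR m).
  { rewrite <- HepsQ. rewrite Rmult_assoc. apply Rmult_le_compat_l. lra.
    unfold Q, D. pose proof (pos_INR m).
    assert (0 <= (be - 1) * (K * INR m)) by (apply Rmult_le_pos; nra).
    assert (a * INR m <= INR m) by nra. nra. }
  assert (Hx : 2 * be * D - E = (6 + ga) * INR m) by (unfold E, D; rewrite <- HgK; unfold ga; ring).
  assert (Hx2 : E - 2 * D = (6 + ga) * INR m) by (unfold E, D; rewrite <- HgK; unfold ga; ring).
  assert (Ham : a / 100 * INR m <= INR m / 100) by (pose proof (pos_INR m); nra).
  assert (Hm2 : 2 <= INR m) by (pose proof (pos_INR k); lra).
  assert (B1 : (1 + eps) * (rpow e1 al + PCR) < rpow (2 * d) al).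
  { rewrite Hre, Hr2. replace ((1 + eps) * (E + PCR)) with (E + PCR + eps * (E + PCR)) by ring. nra. }
  assert (B2 : (1 + eps) * (2 * rpow d al + PCR) < rpow e1 al).
  { rewrite Hre, Hrd. replace ((1 + eps) * (2 * D + PCR)) with (2 * D + PCR + eps * (2 * D + PCR)) by ring. nra. }
  pose proof (master al a e1 d m N1 n2 n3 Halpha Ha0 Ha1 Hd1 Hde He2 HN1 A k eps Hc Hk Happ ltac:(lra) B1 B2) as HM.
  fold PCR in HM. rewrite Hre, Hrd in HM.
  nra.
Qed.
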